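(* Let $q$ be an odd prime power, $\omega$ a non-square in $\mathbb F_q$, $\epsilon\in\mathbb F_{q^2}$ with $\epsilon^2=\omega$, and write $z=z_1+\epsilon z_2$ ($z_i\in\mathbb F_q$) for $z\in\mathbb F_{q^2}$. Let $\mathcal C: aX^2+bXY+cXZ+dYZ+eZ^2=0$ be a non-singular conic of $\mathrm{PG}(2,q^2)$ with $d=1$, $b\notin\mathbb F_q$, and $-bcd+ad^2+b^2e$ a nonzero square in $\mathbb F_{q^2}$. Put $A=-a_2b_1+a_1b_2$, $B=b_2c_1-b_1c_2-a_2d_1+a_1d_2$, $C=-c_2d_1+c_1d_2+b_2e_1-b_1e_2$, $D=d_2e_1-d_1e_2$, and let $\mathcal S\subset\mathrm{PG}(3,q)$ be the cubic surface in coordinates $(t_1:t_2:X:Z)$ with equation $$2t_1t_2(b_1X+d_1Z)-(t_1^2+\omega t_2^2)(b_2X+d_2Z)+AX^3+BX^2Z+CXZ^2+DZ^3=0.$$ Let $\mathcal S_q$ be the number of points of $\mathrm{PG}(3,q)$ on $\mathcal S$, and $n_0$, $n_\infty$ the numbers of those with $t_1=t_2=0$ and with $X=Z=0$ respectively. Then $E_q(\mathcal C)=\frac12(\mathcal S_q-n_0-n_\infty)$.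
   Context: $E_q(\mathcal C)$ is the number of points of $\mathrm{PG}(2,q)$ (canonically embedded in $\mathrm{PG}(2,q^2)$) which are external to $\mathcal C$, i.e. lie on two tangent lines of $\mathcal C$. *)

(* Defs.v *)
From HB Require Import structures.
From mathcomp Require Import all_boot all_order all_algebra all_field.
Set Implicit Arguments. Unset Strict Implicit. Unset Printing Implicit Defensive.
Import Order.TTheory GRing.Theory Num.Theory.
Local Open Scope ring_scope.

(* Projective points of PG(n-1,K): canonical representatives, i.e. nonzero
   row vectors whose first nonzero coordinate equals 1. *)
Definition pnormal (K : fieldType) (n : nat) (v : 'rV[K]_n) : bool :=
  [exists i : 'I_n, (v ord0 i == 1) && [forall j : 'I_n, (j < i)%N ==> (v ord0 j == 0)]].

Definition crd (K : Type) (n : nat) (v : 'rV[K]_n.+1) (k : nat) : K := v ord0 (inord k).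

Definition incident (K : fieldType) (l P : 'rV[K]_3) : bool :=
  \sum_(i < 3) l ord0 i * P ord0 i == 0.

Section Conic.
Variables (L : fieldType) (a b c d e : L).

Definition conicF (v : 'rV[L]_3) : L :=
  let x := crd v 0 in let y := crd v 1 in let z := crd v 2 in
  a * x ^+ 2 + b * x * y + c * x * z + d * y * z + e * z ^+ 2.

Definition conicFX (v : 'rV[L]_3) : L :=
  2%:R * a * crd v 0 + b * crd v 1 + c * crd v 2.
Definition conicFY (v : 'rV[L]_3) : L := b * crd v 0 + d * crd v 2.
Definition conicFZ (v : 'rV[L]_3) : L :=
  c * crd v 0 + d * crd v 1 + 2%:R * e * crd v 2.

Definition conic_nonsingular : Prop :=
  forall v : 'rV[L]_3, pnormal v ->
    ~ [/\ conicF v = 0, conicFX v = 0, conicFY v = 0 & conicFZ v = 0].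
End Conic.

Section Count.
Variables (F L : finFieldType) (iota : {rmorphism F -> L}) (a b c d e : L).

Definition tangent_line (l : 'rV[L]_3) : bool :=
  #|[set Q : 'rV[L]_3 | [&& pnormal Q, conicF a b c d e Q == 0 & incident l Q]]| == 1%N.

Definition external_point (P : 'rV[F]_3) : bool :=
  #|[set l : 'rV[L]_3 | [&& pnormal l, tangent_line l & incident l (map_mx iota P)]]| == 2%N.

Definition Eq_count : nat :=
  #|[set P : 'rV[F]_3 | pnormal P && external_point P]|.
End Count.

Section Surface.
Variables (F : finFieldType) (omega b1 b2 d1 d2 A B C D : F).

Definition surfF (v : 'rV[F]_4) : F :=
  let t1 := crd v 0 in let t2 := crd v 1 in let X := crd v 2 in let Z := crd v 3 in
  2%:R * t1 * t2 * (b1 * X + d1 * Z) - (t1 ^+ 2 + omega * t2 ^+ 2) * (b2 * X + d2 * Z)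
  + A * X ^+ 3 + B * X ^+ 2 * Z + C * X * Z ^+ 2 + D * Z ^+ 3.

Definition surf_points : {set 'rV[F]_4} :=
  [set v : 'rV[F]_4 | pnormal v && (surfF v == 0)].

Definition Sq : nat := #|surf_points|.
Definition n0 : nat := #|[set v in surf_points | (crd v 0 == 0) && (crd v 1 == 0)]|.
Definition ninf : nat := #|[set v in surf_points | (crd v 2 == 0) && (crd v 3 == 0)]|.
End Surface.

(* Main.v *)
Require Import Defs.
From HB Require Import structures.
From mathcomp Require Import all_boot all_order all_algebra all_field.
From mathcomp Require Import all_fingroup all_solvable ring zify.
Import GRing.Theory.
Local Open Scope ring_scope.

Module Helpers.
Set Implicit Arguments. Unset Strict Implicit. Unset Printing Implicit Defensive.
Import FinRing.Theory.
Lemma two_neq0 (K : finFieldType) : odd #|K| -> (2%:R : K) != 0.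
Proof.
move=> Ho; apply/negP => /eqP H2.
have h1 : (#[(1%R:K)]%g %| 2)%N.
  by rewrite order_dvdn zmodXgE zmod1gE; apply/eqP.
have h2 : (#[(1%R:K)]%g %| #|[set: K]|)%N by apply: order_dvdG; rewrite inE.
have : (#[(1%R:K)]%g %| gcdn 2 #|K|)%N by rewrite dvdn_gcd h1 -cardsT h2.
have -> : gcdn 2 #|K| = 1%N.
  by apply/eqP; rewrite -/(coprime 2 _) coprime2n Ho.
rewrite dvdn1 order_eq1 zmod1gE => /eqP H.
by move: (oner_neq0 K); rewrite H eqxx.
Qed.
Lemma pnormal_neq0 (K : fieldType) n (v : 'rV[K]_n) : pnormal v -> v != 0.
Proof.
case/existsP => i /andP [/eqP h _]; apply/negP => /eqP hv.
by move: h; rewrite hv mxE => /eqP; rewrite eq_sym oner_eq0.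
Qed.

Lemma pnormal_inj (K : fieldType) n (v w : 'rV[K]_n) (k m : K) :
  pnormal v -> pnormal w -> k != 0 -> m != 0 -> k *: v = m *: w -> k = m /\ v = w.
Proof.
case/existsP => i /andP [/eqP vi /forallP vj].
case/existsP => j /andP [/eqP wj /forallP wj'] k0 m0 E.
have E' : forall t, k * v ord0 t = m * w ord0 t.
  by move=> t; move/rowP: E => /(_ t); rewrite !mxE.
have eij : i = j.
  case: (ltngtP i j) => h; last by apply: val_inj.
  - have := wj' i; rewrite h /= => /eqP w0.
    by move: (E' i); rewrite vi w0 mulr1 mulr0 => /eqP; rewrite (negbTE k0).
  - have := vj j; rewrite h /= => /eqP v0.
    by move: (E' j); rewrite wj v0 mulr1 mulr0 => /eqP; rewrite eq_sym (negbTE m0).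
subst j.
have km : k = m by move: (E' i); rewrite vi wj !mulr1.
split => //; subst m.
by apply: (scalerI k0).
Qed.

Lemma pnormal_exists (K : fieldType) n (u : 'rV[K]_n) : u != 0 ->
  exists2 k : K, k != 0 & pnormal (k^-1 *: u).
Proof.
move=> u0.
have [i0 hi0] : exists i, u ord0 i != 0.
  apply/existsP; apply: contraR u0 => /existsPn h.
  by apply/eqP/rowP => j; rewrite mxE; have := h j; rewrite negbK => /eqP.
case: (@arg_minnP _ i0 (fun i => u ord0 i != 0) (fun i => nat_of_ord i) hi0) => i ui imin.
exists (u ord0 i) => //.
apply/existsP; exists i; rewrite mxE mulVf // eqxx /=.
apply/forallP => j; apply/implyP => ji.
rewrite mxE; case: (eqVneq (u ord0 j) 0) => [->|h]; first by rewrite mulr0.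
by have := imin j h; rewrite leqNgt ji.
Qed.

Lemma pnormal_count (K : finFieldType) n (P : pred 'rV[K]_n) :
  (forall (k : K) v, k != 0 -> P (k *: v) = P v) ->
  (#|[set v | pnormal v && P v]| * #|K|.-1 = #|[set v | (v != 0%R) && P v]|)%N.
Proof.
move=> HP.
set A := [set v | pnormal v && P v].
set B := [set k : K | k != 0].
have cB : #|B| = #|K|.-1 by rewrite -(cardC1 (0:K)); apply: eq_card => x; rewrite !inE.
rewrite -cB -cardsX.
have -> : [set v | (v != 0%R) && P v] = (fun p : 'rV[K]_n * K => p.2 *: p.1) @: setX A B.
  apply/setP => u; rewrite inE; apply/idP/idP.
  - case/andP => u0 Pu; have [k k0 hk] := pnormal_exists u0.
    apply/imsetP; exists (k^-1 *: u, k); last by rewrite /= scalerA mulfV // scale1r.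
    by rewrite !inE hk /= HP ?invr_eq0 // Pu.
  - case/imsetP => [[v k]]; rewrite !inE /= => /andP [/andP [nv Pv] k0] ->.
    by rewrite scaler_eq0 negb_or k0 (pnormal_neq0 nv) HP.
symmetry; apply: card_in_imset => [[v k] [w m]]; rewrite !inE /= => /andP [/andP [nv _] k0] /andP [/andP [nw _] m0] E.
by have [-> ->] := pnormal_inj nv nw k0 m0 E.
Qed.
Definition mk3 (K : Type) (x y z : K) : 'rV[K]_3 := \row_(i < 3) nth x [:: x; y; z] i.
Definition mk4 (K : Type) (x y z t : K) : 'rV[K]_4 := \row_(i < 4) nth x [:: x; y; z; t] i.

Lemma crd_mk3 (K : Type) (x y z : K) :
  [/\ crd (mk3 x y z) 0 = x, crd (mk3 x y z) 1 = y & crd (mk3 x y z) 2 = z].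
Proof. by rewrite /crd !mxE !inordK. Qed.

Lemma crd_mk4 (K : Type) (x y z t : K) :
  [/\ crd (mk4 x y z t) 0 = x, crd (mk4 x y z t) 1 = y, crd (mk4 x y z t) 2 = z
    & crd (mk4 x y z t) 3 = t].
Proof. by rewrite /crd !mxE !inordK. Qed.

Lemma mk3_crd (K : Type) (v : 'rV[K]_3) : v = mk3 (crd v 0) (crd v 1) (crd v 2).
Proof.
apply/matrixP => i j; rewrite mxE /crd (ord1 i).
case: j => [[|[|[|j]]] Hj] //=; congr (v ord0 _); apply: val_inj; by rewrite /= inordK.
Qed.

Lemma mk4_crd (K : Type) (v : 'rV[K]_4) :
  v = mk4 (crd v 0) (crd v 1) (crd v 2) (crd v 3).
Proof.
apply/matrixP => i j; rewrite mxE /crd (ord1 i).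
case: j => [[|[|[|[|j]]]] Hj] //=; congr (v ord0 _); apply: val_inj; by rewrite /= inordK.
Qed.

Lemma card3 (K : finType) (P : K -> K -> K -> bool) :
  #|[set v : 'rV[K]_3 | P (crd v 0) (crd v 1) (crd v 2)]| =
  #|[set w : K * K * K | P w.1.1 w.1.2 w.2]|.
Proof.
set S := [set v : 'rV[K]_3 | _].
have inj : {in S &, injective (fun v : 'rV[K]_3 => (crd v 0, crd v 1, crd v 2))}.
  move=> v w _ _ [h0 h1 h2]; by rewrite (mk3_crd v) (mk3_crd w) h0 h1 h2.
rewrite -(card_in_imset inj).
  congr (#|pred_of_set _|); apply/setP => [[[x y] z]]; rewrite inE /=; apply/imsetP/idP.
  - by case=> v; rewrite inE => hv [-> -> ->].
  - move=> h; exists (mk3 x y z); last by case: (crd_mk3 x y z) => -> -> ->.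
    by rewrite inE; case: (crd_mk3 x y z) => -> -> ->.
Qed.

Lemma card4 (K : finType) (P : K -> K -> K -> K -> bool) :
  #|[set v : 'rV[K]_4 | P (crd v 0) (crd v 1) (crd v 2) (crd v 3)]| =
  #|[set w : K * K * K * K | P w.1.1.1 w.1.1.2 w.1.2 w.2]|.
Proof.
set S := [set v : 'rV[K]_4 | _].
have inj : {in S &, injective (fun v : 'rV[K]_4 => (crd v 0, crd v 1, crd v 2, crd v 3))}.
  move=> v w _ _ [h0 h1 h2 h3]; by rewrite (mk4_crd v) (mk4_crd w) h0 h1 h2 h3.
rewrite -(card_in_imset inj).
  congr (#|pred_of_set _|); apply/setP => [[[[x y] z] t]]; rewrite inE /=; apply/imsetP/idP.
  - by case=> v; rewrite inE => hv [-> -> -> ->].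
  - move=> h; exists (mk4 x y z t); last by case: (crd_mk4 x y z t) => -> -> -> ->.
    by rewrite inE; case: (crd_mk4 x y z t) => -> -> -> ->.
Qed.

Lemma crd_scale (K : ringType) n (k : K) (v : 'rV[K]_n.+1) i :
  crd (k *: v) i = k * crd v i.
Proof. by rewrite /crd mxE. Qed.

Lemma crd_map (K L : ringType) (f : K -> L) n (v : 'rV[K]_n.+1) i :
  crd (map_mx f v) i = f (crd v i).
Proof. by rewrite /crd mxE. Qed.

Lemma eq0_3 (K : ringType) (v : 'rV[K]_3) :
  (v == 0) = [&& crd v 0 == 0, crd v 1 == 0 & crd v 2 == 0].
Proof.
apply/eqP/idP.
  by move=> ->; rewrite /crd !mxE eqxx.
case/and3P => /eqP h0 /eqP h1 /eqP h2; rewrite (mk3_crd v) h0 h1 h2.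
apply/matrixP => i j; rewrite !mxE; by case: j => [[|[|[|j]]] Hj].
Qed.

Lemma eq0_4 (K : ringType) (v : 'rV[K]_4) :
  (v == 0) = [&& crd v 0 == 0, crd v 1 == 0, crd v 2 == 0 & crd v 3 == 0].
Proof.
apply/eqP/idP.
  by move=> ->; rewrite /crd !mxE eqxx.
case/and4P => /eqP h0 /eqP h1 /eqP h2 /eqP h3; rewrite (mk4_crd v) h0 h1 h2 h3.
apply/matrixP => i j; rewrite !mxE; by case: j => [[|[|[|[|j]]]] Hj].
Qed.

Lemma incidentE (K : fieldType) (l P : 'rV[K]_3) :
  incident l P = (crd l 0 * crd P 0 + crd l 1 * crd P 1 + crd l 2 * crd P 2 == 0).
Proof.
rewrite /incident /crd !big_ord_recr big_ord0 /= add0r.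
have e0 : widen_ord (leqnSn 2) (widen_ord (leqnSn 1) ord_max) = inord 0 :> 'I_3.
  by apply: val_inj; rewrite /= inordK.
have e1 : widen_ord (leqnSn 2) ord_max = inord 1 :> 'I_3.
  by apply: val_inj; rewrite /= inordK.
have e2 : ord_max = inord 2 :> 'I_3.
  by apply: val_inj; rewrite /= inordK.
by rewrite e0 e1 e2.
Qed.
Definition issq (K : finFieldType) (D : K) := [exists s : K, s ^+ 2 == D].

Lemma card_sqrt (K : finFieldType) (h2 : 2%:R != 0 :> K) (D : K) :
  #|[set u : K | u ^+ 2 == D]| = if D == 0 then 1%N else if issq D then 2%N else 0%N.
Proof.
case: eqP => [->|D0].
  transitivity #|[set (0:K)]|; last exact: cards1.
  congr (#|pred_of_set _|); apply/setP => u.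
  by rewrite !inE sqrf_eq0.
case: ifP => hs.
  case/existsP: hs => s /eqP hs.
  have -> : [set u : K | u ^+ 2 == D] = [set s; -s].
    by apply/setP => u; rewrite !inE -hs eqf_sqr.
  suff hss : s != -s by rewrite cards2 hss.
  rewrite -subr_eq0 opprK -mulr2n -mulr_natr mulf_eq0 negb_or h2 andbT.
  by apply/negP => /eqP s0; apply: D0; rewrite -hs s0 expr0n.
transitivity #|(set0 : {set K})|; last exact: cards0.
congr (#|pred_of_set _|); apply/setP => u.
rewrite !inE; apply/negP => /eqP hu; move: hs; rewrite /issq.
suff -> : [exists s, s ^+ 2 == D] by [].
by apply/existsP; exists u; rewrite hu.
Qed.

Lemma card_quad (K : finFieldType) (h2 : 2%:R != 0 :> K) (al be ga : K) :
  al != 0 ->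
  #|[set t : K | al * t ^+ 2 + be * t + ga == 0]| =
  #|[set u : K | u ^+ 2 == be ^+ 2 - 4%:R * al * ga]|.
Proof.
move=> a0.
have h4 : (4%:R : K) != 0.
  have -> : (4%:R : K) = 2%:R * 2%:R by rewrite -natrM.
  by rewrite mulf_neq0.
set U := [set u : K | u ^+ 2 == _].
have inj : injective (fun t : K => 2%:R * al * t + be).
  move=> x y /= /addIr /mulfI; apply; by rewrite mulf_neq0.
rewrite -(card_preimset U inj); congr (#|pred_of_set _|); apply/setP => t.
rewrite !inE.
have E : (2%:R * al * t + be) ^+ 2 - (be ^+ 2 - 4%:R * al * ga) =
         (4%:R * al) * (al * t ^+ 2 + be * t + ga) by ring.
rewrite -[RHS]subr_eq0 E mulf_eq0.
by have -> : (4%:R * al == 0) = false by apply/negbTE; rewrite mulf_neq0.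
Qed.
Lemma conic_param (K : finFieldType) (ka p0 p1 p2 : K) : ka != 0 ->
  #|[set w : K * K * K | [&& (w.1.1 != 0) || (w.1.2 != 0) || (w.2 != 0),
      w.1.1 ^+ 2 + ka * w.1.2 * w.2 == 0 &
      p0 * w.1.1 + p1 * w.1.2 + p2 * w.2 == 0]]| =
  (#|K|.-1 * (#|[set t : K | ((- p1 / ka) * t ^+ 2 + p0 * t + p2 == 0)%R]| + (p1 == 0%R)))%N.
Proof.
move=> k0.
set S := [set w : K * K * K | _].
set R := [set t : K | _].
set B := [set k : K | k != 0].
have cB : #|B| = #|K|.-1 by rewrite -(cardC1 (0:K)); apply: eq_card => x; rewrite !inE.
rewrite -(cardsID [set w : K * K * K | w.2 != 0] S) mulnDr -cB.
congr (_ + _)%N.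
  rewrite -cardsX.
  pose f := fun p : K * K => (p.1 * p.2, - p.1 * p.2 ^+ 2 / ka, p.1).
  have inj : {in setX B R &, injective f}.
    move=> [l t] [l' t']; rewrite !inE /= => /andP [l0 _] /andP [l0' _] [e1 e2 e3].
    subst l'; congr (_, _); apply: (mulfI l0); exact: e1.
  rewrite -(card_in_imset inj); congr (#|pred_of_set _|); apply/setP => [[[x y] z]].
  rewrite !inE /=; apply/andP/imsetP.
  - case=> [/and3P [_ /eqP hc /eqP hl] z0].
    exists (z, x / z).
      rewrite !inE z0 /=.
      have -> : - p1 / ka * (x / z) ^+ 2 + p0 * (x / z) + p2 =
               (p0 * x + p1 * (- x ^+ 2 / (ka * z)) + p2 * z) / z.
        by field; rewrite z0 k0.
      have -> : - x ^+ 2 / (ka * z) = y.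
        apply: (mulfI k0); apply: (mulIf z0).
        have -> : ka * y * z = - x ^+ 2 by apply/eqP; rewrite -subr_eq0 opprK addrC; apply/eqP.
        by field; rewrite z0 k0.
      by rewrite hl mul0r.
    rewrite /f /=; congr (_, _, _).
    - by field.
    - have -> : y = - x ^+ 2 / (ka * z).
        apply: (mulfI k0); apply: (mulIf z0).
        have -> : ka * y * z = - x ^+ 2 by apply/eqP; rewrite -subr_eq0 opprK addrC; apply/eqP.
        by field; rewrite z0 k0.
      by field; rewrite z0 k0.
  - case=> [[l t]]; rewrite !inE /= => /andP [l0 ht] [-> -> ->].
    split => //; apply/and3P; split; first by rewrite l0 orbT.
      by apply/eqP; field.
    have -> : p0 * (l * t) + p1 * (- l * t ^+ 2 / ka) + p2 * l =
              l * (- p1 / ka * t ^+ 2 + p0 * t + p2) by field.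
    by rewrite (eqP ht) mulr0.
have [hp1|hp1] := eqVneq p1 0.
- rewrite muln1.
  pose g := fun y : K => (0:K, y, 0:K).
  have inj : injective g by move=> y y' [].
  rewrite -(card_imset B inj); congr (#|pred_of_set _|); apply/setP => [[[x y] z]].
  rewrite !inE /=; apply/andP/imsetP.
    case=> [/negPn /eqP z0 /and3P [nz /eqP hc _]]; subst z.
    have x0 : x = 0 by apply/eqP; rewrite -sqrf_eq0; move: hc; rewrite mulr0 addr0 => ->.
    subst x; exists y; last by [].
    by rewrite inE; move: nz; rewrite eqxx /= orbF.
  + case=> y'; rewrite inE => y0 [-> -> ->].
    split; first by rewrite eqxx.
    rewrite y0 orbT /=; apply/andP; split; apply/eqP; rewrite ?hp1; ring.
- rewrite muln0.
  apply/eqP; rewrite cards_eq0; apply/eqP/setP => [[[x y] z]]; rewrite !inE /=.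
  apply/negP => /andP [/negPn /eqP z0 /and3P [nz /eqP hc /eqP hl]]; subst z.
  have x0 : x = 0 by apply/eqP; rewrite -sqrf_eq0; move: hc; rewrite mulr0 addr0 => ->.
  subst x; move: nz; rewrite eqxx /= orbF => y0.
  move: hl; rewrite !mulr0 add0r addr0 => /eqP; rewrite mulf_eq0 (negbTE hp1) (negbTE y0).
  done.
Qed.
Lemma card_lin (K : finFieldType) (al be ga : K) : al = 0 ->
  #|[set t : K | al * t ^+ 2 + be * t + ga == 0]| =
  if be != 0 then 1%N else if ga == 0 then #|K| else 0%N.
Proof.
move=> ->.
case: ifP => b0.
  transitivity #|[set (- ga / be)]|; last exact: cards1.
  congr (#|pred_of_set _|); apply/setP => t; rewrite !inE mul0r add0r.
  apply/eqP/eqP => [h|->]; last by field.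
  have ht : be * t = - ga by apply/eqP; rewrite -subr_eq0 opprK h.
  by rewrite -ht; field.
move/negbT: b0; rewrite negbK => /eqP ->.
case: eqP => [->|g0].
  by rewrite -cardsT; congr (#|pred_of_set _|); apply/setP => t; rewrite !inE !mul0r !addr0 eqxx.
transitivity #|(set0 : {set K})|; last exact: cards0.
congr (#|pred_of_set _|); apply/setP => t; rewrite !inE !mul0r !add0r.
by apply/eqP.
Qed.

Lemma ntup3 (K : ringType) (x y z : K) :
  ((x, y, z) != (0, 0, 0)) = (x != 0) || (y != 0) || (z != 0).
Proof. by rewrite !xpair_eqE !negb_and. Qed.

Section Tangent.
Variables (L : finFieldType) (a b c e s : L).
Hypothesis h2 : 2%:R != 0 :> L.
Hypothesis hs : s ^+ 2 = - b * c + a + b ^+ 2 * e.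
Hypothesis s0 : s != 0.

Definition Qf (x y z : L) := a * x ^+ 2 + b * x * y + c * x * z + 1 * y * z + e * z ^+ 2.
Definition mL0 (l0 l1 l2 : L) := (l0 - c * l1 + 2%:R * b * e * l1 - b * l2) / s.
Definition Hf (v : L * L * L) : L * L * L :=
  (s * v.1.1, v.1.2 + (c - e * b) * v.1.1 + e * v.2, b * v.1.1 + v.2).
Definition Hinv (w : L * L * L) : L * L * L :=
  (w.1.1 / s, w.1.2 - (c - e * b) * (w.1.1 / s) - e * (w.2 - b * (w.1.1 / s)),
   w.2 - b * (w.1.1 / s)).

Lemma HinvK : cancel Hinv Hf.
Proof. by move=> [[x y] z]; rewrite /Hf /Hinv /=; congr (_, _, _); field. Qed.

Lemma Hinv_inj : injective Hinv.
Proof. exact: can_inj HinvK. Qed.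

Lemma Hinv_eq0 w : (Hinv w == (0, 0, 0)) = (w == (0, 0, 0)).
Proof.
apply/eqP/eqP => [h|->]; last by rewrite /Hinv /=; congr (_, _, _); field.
by rewrite -(HinvK w) h /Hf /=; congr (_, _, _); ring.
Qed.

Lemma Qf_Hinv x y z :
  Qf (Hinv (x, y, z)).1.1 (Hinv (x, y, z)).1.2 (Hinv (x, y, z)).2 = x ^+ 2 + 1 * y * z.
Proof.
rewrite /Qf /Hinv /=.
have -> : x ^+ 2 = s ^+ 2 * (x / s) ^+ 2 by field.
by rewrite hs; field.
Qed.

Lemma tangentE (l : 'rV[L]_3) : l != 0 ->
  tangent_line a b c 1 e l =
  (mL0 (crd l 0) (crd l 1) (crd l 2) ^+ 2 + 4%:R * crd l 1 * (crd l 2 - e * crd l 1) == 0).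
Proof.
move=> l0.
set P := fun Q : 'rV[L]_3 => (conicF a b c 1 e Q == 0) && incident l Q.
have hP : forall (k : L) v, k != 0 -> P (k *: v) = P v.
  move=> k v k0; rewrite /P !incidentE.
  have -> : conicF a b c 1 e (k *: v) = k ^+ 2 * conicF a b c 1 e v.
    by rewrite /conicF !crd_scale; ring.
  rewrite !crd_scale.
  have -> : crd l 0 * (k * crd v 0) + crd l 1 * (k * crd v 1) + crd l 2 * (k * crd v 2) =
            k * (crd l 0 * crd v 0 + crd l 1 * crd v 1 + crd l 2 * crd v 2) by ring.
  by rewrite !mulf_eq0 (negbTE k0).
have := pnormal_count hP.
set m0 := mL0 (crd l 0) (crd l 1) (crd l 2).
set m1 := crd l 1.
set m2 := crd l 2 - e * crd l 1.
pose Pt x y z := ~~ [&& x == 0, y == 0 & z == 0] &&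
   ((Qf x y z == 0) && (crd l 0 * x + crd l 1 * y + crd l 2 * z == 0)).
have -> : [set v | (v != 0) && P v] = [set v : 'rV[L]_3 | Pt (crd v 0) (crd v 1) (crd v 2)].
  by apply/setP => v; rewrite !inE /P incidentE eq0_3.
rewrite (card3 Pt) -(card_preimset _ Hinv_inj).
have -> : #|Hinv @^-1: [set w | Pt w.1.1 w.1.2 w.2]| =
   #|[set w : L * L * L | [&& (w.1.1 != 0) || (w.1.2 != 0) || (w.2 != 0),
      w.1.1 ^+ 2 + 1 * w.1.2 * w.2 == 0 &
      m0 * w.1.1 + m1 * w.1.2 + m2 * w.2 == 0]]|.
  congr (#|pred_of_set _|); apply/setP => [[[x y] z]]; rewrite !inE /=.
  rewrite /Pt Qf_Hinv.
  have := Hinv_eq0 (x, y, z); rewrite /Hinv /= !xpair_eqE -andbA => ->.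
  have -> : crd l 0 * (x / s) +
      crd l 1 * (y - (c - e * b) * (x / s) - e * (z - b * (x / s))) +
      crd l 2 * (z - b * (x / s)) = m0 * x + m1 * y + m2 * z.
    by rewrite /m0 /m1 /m2 /mL0; field.
  by rewrite !negb_and.
rewrite conic_param ?oner_neq0 //.
have hL : (0 < #|L|.-1)%N by have := @finNzRing_gt1 L; rewrite -subn1 subn_gt0.
rewrite mulnC => /eqP; rewrite eqn_pmul2l // => /eqP H.
transitivity (#|[set v | pnormal v && P v]| == 1%N); first by [].
rewrite H.
have [m10|m10] := eqVneq m1 0.
  rewrite card_lin; last by rewrite m10 oppr0 mul0r.
  have [m00|m00] := eqVneq m0 0.
    have m20 : m2 != 0.
      apply: contraNneq l0 => m20; rewrite eq0_3; apply/and3P.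
      have h1 : crd l 1 = 0 by exact: m10.
      have h2' : crd l 2 = 0 by move: m20; rewrite /m2 h1 mulr0 subr0.
      split; apply/eqP => //.
      move: m00; rewrite /m0 /mL0 h1 h2' => /eqP; rewrite mulf_eq0 invr_eq0 (negbTE s0) orbF.
      by rewrite !mulr0 !subr0 addr0 => /eqP.
    by rewrite /= (negbTE m20) m00 m10 expr2 !mulr0 !mul0r addr0 !eqxx.
  by rewrite /= m10 !mulr0 !mul0r addr0 sqrf_eq0 (negbTE m00).
rewrite addn0 card_quad //; last by rewrite mulf_eq0 oppr_eq0 invr_eq0 oner_eq0 (negbTE m10).
rewrite card_sqrt //.
rewrite divr1 mulrN mulNr opprK.
by case: (_ == 0) => //; case: (issq _).
Qed.

Definition Mf (l : L * L * L) : L * L * L :=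
  (mL0 l.1.1 l.1.2 l.2, l.1.2, l.2 - e * l.1.2).
Definition Minv (m : L * L * L) : L * L * L :=
  (s * m.1.1 + c * m.1.2 - 2%:R * b * e * m.1.2 + b * (m.2 + e * m.1.2), m.1.2, m.2 + e * m.1.2).

Lemma MinvK : cancel Minv Mf.
Proof. by move=> [[x y] z]; rewrite /Mf /Minv /mL0 /=; congr (_, _, _); field. Qed.

Lemma Minv_inj : injective Minv.
Proof. exact: can_inj MinvK. Qed.

Lemma Minv_eq0 w : (Minv w == (0, 0, 0)) = (w == (0, 0, 0)).
Proof.
apply/eqP/eqP => [h|->]; last by rewrite /Minv /=; congr (_, _, _); ring.
by rewrite -(MinvK w) h /Mf /mL0 /=; congr (_, _, _); field.
Qed.

Lemma incident_scale (l Q : 'rV[L]_3) (k : L) : k != 0 ->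
  incident (k *: l) Q = incident l Q.
Proof.
move=> k0; rewrite !incidentE !crd_scale.
have -> : k * crd l 0 * crd Q 0 + k * crd l 1 * crd Q 1 + k * crd l 2 * crd Q 2 =
          k * (crd l 0 * crd Q 0 + crd l 1 * crd Q 1 + crd l 2 * crd Q 2) by ring.
by rewrite mulf_eq0 (negbTE k0).
Qed.

Lemma tangent_scale (l : 'rV[L]_3) (k : L) : k != 0 ->
  tangent_line a b c 1 e (k *: l) = tangent_line a b c 1 e l.
Proof.
move=> k0; rewrite /tangent_line; congr (#|pred_of_set _| == _); apply/setP => Q.
by rewrite !inE incident_scale.
Qed.

Lemma tangent_count (pv : 'rV[L]_3) :
  (#|[set l | [&& pnormal l, tangent_line a b c 1 e l & incident l pv]]| == 2%N) =
  (Qf (crd pv 0) (crd pv 1) (crd pv 2) != 0) && issq (Qf (crd pv 0) (crd pv 1) (crd pv 2)).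
Proof.
set P := fun l : 'rV[L]_3 => tangent_line a b c 1 e l && incident l pv.
have hP : forall (k : L) v, k != 0 -> P (k *: v) = P v.
  by move=> k v k0; rewrite /P tangent_scale // incident_scale.
have := pnormal_count hP.
set x := crd pv 0; set y := crd pv 1; set z := crd pv 2.
set p0 := s * x; set p1 := y + (c - e * b) * x + e * z; set p2 := b * x + z.
pose Pt l0 l1 l2 := ~~ [&& l0 == 0, l1 == 0 & l2 == 0] &&
   ((mL0 l0 l1 l2 ^+ 2 + 4%:R * l1 * (l2 - e * l1) == 0) && (l0 * x + l1 * y + l2 * z == 0)).
have -> : [set v | (v != 0) && P v] = [set v : 'rV[L]_3 | Pt (crd v 0) (crd v 1) (crd v 2)].
  apply/setP => v; rewrite !inE /P /Pt -eq0_3; case: eqVneq => //= v0.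
  by rewrite tangentE // incidentE.
rewrite (card3 Pt) -(card_preimset _ Minv_inj).
have -> : #|Minv @^-1: [set w | Pt w.1.1 w.1.2 w.2]| =
   #|[set w : L * L * L | [&& (w.1.1 != 0) || (w.1.2 != 0) || (w.2 != 0),
      w.1.1 ^+ 2 + 4%:R * w.1.2 * w.2 == 0 &
      p0 * w.1.1 + p1 * w.1.2 + p2 * w.2 == 0]]|.
  congr (#|pred_of_set _|); apply/setP => [[[m0 m1] m2]]; rewrite !inE /=.
  rewrite /Pt.
  have := Minv_eq0 (m0, m1, m2); rewrite /Minv /= !xpair_eqE -andbA => ->.
  have -> : mL0 (s * m0 + c * m1 - 2%:R * b * e * m1 + b * (m2 + e * m1)) m1 (m2 + e * m1) = m0.
    by rewrite /mL0; field.
  have -> : m2 + e * m1 - e * m1 = m2 by ring.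
  have -> : (s * m0 + c * m1 - 2%:R * b * e * m1 + b * (m2 + e * m1)) * x + m1 * y +
      (m2 + e * m1) * z = p0 * m0 + p1 * m1 + p2 * m2 by rewrite /p0 /p1 /p2; ring.
  by rewrite !negb_and.
have h4 : (4%:R : L) != 0.
  have -> : (4%:R : L) = 2%:R * 2%:R by rewrite -natrM.
  by rewrite mulf_neq0.
rewrite conic_param //.
have hL : (0 < #|L|.-1)%N by have := @finNzRing_gt1 L; rewrite -subn1 subn_gt0.
rewrite mulnC => /eqP; rewrite eqn_pmul2l // => /eqP H.
transitivity (#|[set v | pnormal v && P v]| == 2%N); first by [].
rewrite H.
have -> : Qf x y z = p0 ^+ 2 + p1 * p2.
  rewrite /Qf /p0 /p1 /p2 exprMn hs; ring.
have [p10|p10] := eqVneq p1 0.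
  rewrite card_lin; last by rewrite p10 oppr0 mul0r.
  rewrite p10 mul0r addr0.
  have [p00|p00] := eqVneq p0 0.
    rewrite /= p00 expr2 mulr0 eqxx /=.
    case: (p2 == 0) => //=.
    by apply/negbTE; have := @finNzRing_gt1 L; rewrite addn1 eqSS; apply: contraL => /eqP ->.
  rewrite /= sqrf_eq0 p00 /=; apply/esym/existsP; exists p0; done.
rewrite addn0 card_quad //; last by rewrite mulf_eq0 oppr_eq0 invr_eq0 (negbTE h4) orbF.
rewrite card_sqrt //.
have -> : p0 ^+ 2 - 4%:R * (- p1 / 4%:R) * p2 = p0 ^+ 2 + p1 * p2 by field.
by case: (_ == 0) => //; case: (issq _).
Qed.

End Tangent.
Lemma card_pairs (T1 T2 : finType) (R : T1 -> T2 -> bool) :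
  #|[set p : T1 * T2 | R p.1 p.2]| = (\sum_(x : T1) #|[set y | R x y]|)%N.
Proof.
rewrite -sum1_card.
rewrite (eq_bigl (fun p : T1 * T2 => predT p.1 && R p.1 p.2)); last by move=> p; rewrite inE.
rewrite -(pair_big_dep predT R (fun _ _ => 1%N)) /=.
by apply: eq_bigr => x _; rewrite -sum1_card; apply: eq_bigl => y; rewrite inE.
Qed.

Lemma issq_scale (K : finFieldType) (k D : K) : k != 0 -> issq (k ^+ 2 * D) = issq D.
Proof.
move=> k0; rewrite /issq; apply/existsP/existsP => [[w /eqP hw]|[w /eqP hw]].
  by exists (w / k); apply/eqP; rewrite expr_div_n hw; field.
by exists (k * w); rewrite exprMn hw.
Qed.

Lemma card_sqrt_nz (K : finFieldType) (h2 : 2%:R != 0 :> K) (D : K) :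
  #|[set u : K | (u != 0) && (u ^+ 2 == D)]| = if (D != 0) && issq D then 2%N else 0%N.
Proof.
have [->|D0] := eqVneq D 0.
  rewrite /=; transitivity #|(set0 : {set K})|; last exact: cards0.
  congr (#|pred_of_set _|); apply/setP => u; rewrite !inE sqrf_eq0.
  by case: eqP.
transitivity #|[set u : K | u ^+ 2 == D]|; last by rewrite card_sqrt // (negbTE D0).
congr (#|pred_of_set _|); apply/setP => u; rewrite !inE.
case: eqVneq => // ->; rewrite expr0n /= eq_sym; exact/esym/negbTE.
Qed.
End Helpers.
Import Helpers FinRing.Theory.

Theorem mainTheorem7
  (F L : finFieldType) (iota : {rmorphism F -> L})
  (HoddF : odd #|F|) (HcardL : #|L| = (#|F| ^ 2)%N)
  (omega : F) (Homega : forall x : F, x ^+ 2 != omega)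
  (eps : L) (Heps : eps ^+ 2 = iota omega)
  (a b c d e : L) (a1 a2 b1 b2 c1 c2 d1 d2 e1 e2 : F)
  (Ha : a = iota a1 + eps * iota a2) (Hb : b = iota b1 + eps * iota b2)
  (Hc : c = iota c1 + eps * iota c2) (Hd : d = iota d1 + eps * iota d2)
  (He : e = iota e1 + eps * iota e2)
  (Hnonsing : conic_nonsingular a b c d e)
  (Hd1 : d = 1)
  (Hbq : forall x : F, b != iota x)
  (Hsq : (- b * c * d + a * d ^+ 2 + b ^+ 2 * e != 0) /\
         exists s : L, - b * c * d + a * d ^+ 2 + b ^+ 2 * e = s ^+ 2) :
  let A := - a2 * b1 + a1 * b2 in
  let B := b2 * c1 - b1 * c2 - a2 * d1 + a1 * d2 in
  let C := - c2 * d1 + c1 * d2 + b2 * e1 - b1 * e2 in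
  let D := d2 * e1 - d1 * e2 in
  ((Eq_count iota a b c d e)%:R : rat) =
    ((Sq omega b1 b2 d1 d2 A B C D)%:R - (n0 omega b1 b2 d1 d2 A B C D)%:R
      - (ninf omega b1 b2 d1 d2 A B C D)%:R) / 2%:R.
Proof.
move=> A B C D.
have h2F : (2%:R : F) != 0 := two_neq0 HoddF.
have h2 : (2%:R : L) != 0 by rewrite -(rmorph_nat iota) fmorph_eq0.
have indep : forall x y : F, iota x + eps * iota y = 0 -> x = 0 /\ y = 0.
  move=> x y h.
  have y0 : y = 0.
    have [//|y0] := eqVneq y 0; exfalso.
    have ee : eps = iota (- x / y).
      have iy : iota y != 0 by rewrite fmorph_eq0.
      rewrite fmorph_div rmorphN; apply: (mulIf iy); rewrite divfK //.
      by apply/eqP; rewrite -addr_eq0 addrC h.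
    by move: (Homega (- x / y)); rewrite -(inj_eq (fmorph_inj iota)) rmorphXn -ee Heps eqxx.
  by split => //; move: h; rewrite y0 rmorph0 mulr0 addr0 => /eqP; rewrite fmorph_eq0 => /eqP.
have [d1E d2E] : d1 = 1 /\ d2 = 0.
  have [] := indep (d1 - 1) d2.
    by rewrite rmorphB rmorph1 addrAC -Hd Hd1 subrr.
  by move=> /eqP; rewrite subr_eq0 => /eqP.
have b20 : b2 != 0.
  by apply/eqP => b20; move: (Hbq b1); rewrite Hb b20 rmorph0 mulr0 addr0 eqxx.
have [s hs s0] : exists2 s : L, s ^+ 2 = - b * c + a + b ^+ 2 * e & s != 0.
  case: Hsq => HD [s hs]; exists s; first by rewrite -hs Hd1; ring.
  by apply: contraNneq HD => s0; rewrite hs s0 expr0n.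
rewrite Hd1.
pose Qf' (w : F * F * F) := Qf a b c e (iota w.1.1) (iota w.1.2) (iota w.2).
pose Qsq (w : F * F * F) := (Qf' w != 0) && issq (Qf' w).
have Eq1 : Eq_count iota a b c 1 e =
   #|[set P : 'rV[F]_3 | pnormal P && Qsq (crd P 0, crd P 1, crd P 2)]|.
  rewrite /Eq_count; congr (#|pred_of_set _|); apply/setP => P; rewrite !inE.
  by rewrite /external_point (tangent_count h2 hs s0) !crd_map.
have Qf'0 : Qf' (0, 0, 0) = 0 by rewrite /Qf' /Qf /= rmorph0; ring.
have Eq2 : (#|[set P : 'rV[F]_3 | pnormal P && Qsq (crd P 0, crd P 1, crd P 2)]| * #|F|.-1 =
            #|[set w : F * F * F | Qsq w]|)%N.
  rewrite pnormal_count; last first.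
    move=> k v k0; rewrite !crd_scale /Qsq.
    have -> : Qf' (k * crd v 0, k * crd v 1, k * crd v 2) =
              iota k ^+ 2 * Qf' (crd v 0, crd v 1, crd v 2).
      by rewrite /Qf' /Qf /= !rmorphM; ring.
    have ik : iota k != 0 by rewrite fmorph_eq0.
    by rewrite issq_scale // mulf_eq0 expf_eq0 /= (negbTE ik).
  transitivity #|[set v : 'rV[F]_3 | Qsq (crd v 0, crd v 1, crd v 2)]|.
    congr (#|pred_of_set _|); apply/setP => v; rewrite !inE.
    case: eqVneq => //= ->; rewrite /crd !mxE -/(crd _ _).
    by rewrite /Qsq Qf'0 eqxx.
  rewrite (card3 (fun x y z => Qsq (x, y, z))).
  by congr (#|pred_of_set _|); apply/setP => [[[x y] z]]; rewrite !inE.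
have Eq3 : #|[set p : (F * F * F) * L | (p.2 != 0) && (p.2 ^+ 2 == Qf' p.1)]| =
            (2 * #|[set w : F * F * F | Qsq w]|)%N.
  rewrite (card_pairs (fun w u => (u != 0) && (u ^+ 2 == Qf' w))).
  under eq_bigr => w _ do rewrite (card_sqrt_nz h2).
  rewrite -big_mkcond /=.
  transitivity (\sum_(w in [set w : F * F * F | Qsq w]) 2)%N.
    by apply: eq_bigl => w; rewrite inE.
  by rewrite sum_nat_const mulnC.
pose Sfun (t1 t2 X Z : F) := 2%:R * t1 * t2 * (b1 * X + d1 * Z) -
   (t1 ^+ 2 + omega * t2 ^+ 2) * (b2 * X + d2 * Z)
   + A * X ^+ 3 + B * X ^+ 2 * Z + C * X * Z ^+ 2 + D * Z ^+ 3.
have SfE : forall v, surfF omega b1 b2 d1 d2 A B C D v = Sfun (crd v 0) (crd v 1) (crd v 2) (crd v 3).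
  by [].
pose SP := surf_points omega b1 b2 d1 d2 A B C D.
pose N0 := [set v : 'rV[F]_4 | (crd v 0 == 0) && (crd v 1 == 0)].
pose Ni := [set v : 'rV[F]_4 | (crd v 2 == 0) && (crd v 3 == 0)].
pose Rcond (t1 t2 X Z : F) := [&& Sfun t1 t2 X Z == 0, ~~ ((t1 == 0) && (t2 == 0)) &
                                  ~~ ((X == 0) && (Z == 0))].
pose Rest := #|[set v : 'rV[F]_4 | pnormal v && Rcond (crd v 0) (crd v 1) (crd v 2) (crd v 3)]|.
have S1 : Sq omega b1 b2 d1 d2 A B C D = (n0 omega b1 b2 d1 d2 A B C D +
            ninf omega b1 b2 d1 d2 A B C D + Rest)%N.
  have e0 : n0 omega b1 b2 d1 d2 A B C D = #|SP :&: N0|.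
    by rewrite /n0; congr (#|pred_of_set _|); apply/setP => v; rewrite !inE.
  have ei : ninf omega b1 b2 d1 d2 A B C D = #|(SP :\: N0) :&: Ni|.
    rewrite /ninf; congr (#|pred_of_set _|); apply/setP => v; rewrite !inE.
    case: (boolP (pnormal v)) => pv /=; last by rewrite andbF.
    have := pnormal_neq0 pv; rewrite eq0_4.
    by case: (crd v 0 == 0); case: (crd v 1 == 0); case: (crd v 2 == 0); case: (crd v 3 == 0);
      rewrite /= ?andbF ?andbT.
  have er : Rest = #|(SP :\: N0) :\: Ni|.
    rewrite /Rest; congr (#|pred_of_set _|); apply/setP => v; rewrite !inE /Rcond -SfE.
    by case: (pnormal v); case: (surfF _ _ _ _ _ _ _ _ _ v == 0); case: (~~ _); case: (~~ _).
  by rewrite e0 ei er -addnA cardsID cardsID.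
have S2 : (Rest * #|F|.-1 = #|[set w : F * F * F * F |
            Rcond w.1.1.1 w.1.1.2 w.1.2 w.2]|)%N.
  rewrite /Rest pnormal_count; last first.
    move=> k v k0; rewrite !crd_scale /Rcond.
    have -> : Sfun (k * crd v 0) (k * crd v 1) (k * crd v 2) (k * crd v 3) =
              k ^+ 3 * Sfun (crd v 0) (crd v 1) (crd v 2) (crd v 3) by rewrite /Sfun; ring.
    by rewrite !mulf_eq0 (negbTE k0).
  transitivity #|[set v : 'rV[F]_4 | Rcond (crd v 0) (crd v 1) (crd v 2) (crd v 3)]|.
    congr (#|pred_of_set _|); apply/setP => v; rewrite !inE.
    case: eqVneq => //= ->; rewrite /crd !mxE -/(crd _ _).
    by rewrite /Rcond eqxx /= andbF.
  exact: (card4 Rcond).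
pose SRC := [set p : (F * F * F) * L | (p.2 != 0) && (p.2 ^+ 2 == Qf' p.1)].
pose TGT := [set w : F * F * F * F | Rcond w.1.1.1 w.1.1.2 w.1.2 w.2].
have Bij : #|SRC| = #|TGT|.
  pose phi (t : F * F) := iota t.1 + eps * iota t.2.
  have phi_inj : injective phi.
    move=> [x y] [x' y'] /= h.
    have [] := indep (x - x') (y - y').
      by move: h; rewrite /phi /= => h; rewrite !rmorphB mulrBr addrACA -opprD h subrr.
    by move=> /eqP; rewrite subr_eq0 => /eqP -> /eqP; rewrite subr_eq0 => /eqP ->.
  have phi_eq0 : forall t, (phi t == 0) = (t.1 == 0) && (t.2 == 0).
    move=> [x y]; rewrite /phi /=; apply/eqP/andP => [/indep [-> ->] //|[/eqP -> /eqP ->]].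
    by rewrite rmorph0 mulr0 addr0.
  have phi_onto : forall u, exists t, phi t = u.
    move=> u; have := @inj_card_onto _ _ phi phi_inj _ u.
    rewrite card_prod HcardL expnS expn1 leqnn => /(_ isT) /codomP [t ->].
    by exists t.
  pose be1 (X Z : F) := b1 * X + d1 * Z.
  pose be2 (X Z : F) := b2 * X + d2 * Z.
  pose W1 (t1 t2 X Z : F) := t1 ^+ 2 + omega * t2 ^+ 2 - (a1 * X ^+ 2 + c1 * X * Z + e1 * Z ^+ 2).
  pose W2 (t1 t2 X Z : F) := 2%:R * t1 * t2 - (a2 * X ^+ 2 + c2 * X * Z + e2 * Z ^+ 2).
  have QE : forall t1 t2 X y Z, Qf' (X, y, Z) - phi (t1, t2) ^+ 2 =
     iota (y * be1 X Z - W1 t1 t2 X Z) + eps * iota (y * be2 X Z - W2 t1 t2 X Z).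
    move=> t1 t2 X y Z.
    rewrite /Qf' /Qf /phi /be1 /be2 /W1 /W2 /= Ha Hb Hc He d1E d2E.
    rewrite !(rmorphB, rmorphD, rmorphM, rmorphXn, rmorph_nat, rmorph1, rmorph0) -Heps.
    ring.
  have EQ : forall t1 t2 X y Z, (phi (t1, t2) ^+ 2 == Qf' (X, y, Z)) =
      (y * be1 X Z - W1 t1 t2 X Z == 0) && (y * be2 X Z - W2 t1 t2 X Z == 0).
    move=> t1 t2 X y Z; rewrite eq_sym -subr_eq0 QE.
    apply/eqP/andP => [/indep [-> ->] //|[/eqP -> /eqP ->]].
    by rewrite rmorph0 mulr0 addr0.
  have SE : forall t1 t2 X Z,
      Sfun t1 t2 X Z = be1 X Z * W2 t1 t2 X Z - be2 X Z * W1 t1 t2 X Z.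
    by move=> t1 t2 X Z; rewrite /Sfun /be1 /be2 /W1 /W2 /A /B /C /D; ring.
  have NZ : forall X Z, ~~ ((X == 0) && (Z == 0)) -> (be1 X Z != 0) || (be2 X Z != 0).
    move=> X Z; apply: contraR; rewrite negb_or !negbK /be1 /be2 d1E d2E.
    rewrite mul0r addr0 mul1r mulf_eq0 (negbTE b20) /= => /andP [/eqP h1 /eqP X0].
    by move: h1; rewrite X0 mulr0 add0r => ->; rewrite !eqxx.
  pose yf t1 t2 X Z := if be2 X Z != 0 then W2 t1 t2 X Z / be2 X Z
                       else W1 t1 t2 X Z / be1 X Z.
  have Ex : forall t1 t2 X Z, Sfun t1 t2 X Z = 0 -> ~~ ((X == 0) && (Z == 0)) ->
      (yf t1 t2 X Z * be1 X Z - W1 t1 t2 X Z == 0) &&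
      (yf t1 t2 X Z * be2 X Z - W2 t1 t2 X Z == 0).
    move=> t1 t2 X Z hS hXZ; rewrite SE in hS; rewrite /yf.
    have [h0|h0] := eqVneq (be2 X Z) 0; rewrite /=.
      have h1 : be1 X Z != 0 by move: (NZ X Z hXZ); rewrite h0 eqxx orbF.
      rewrite h0 mulr0 add0r oppr_eq0; apply/andP; split; apply/eqP; first by field.
      by move: hS; rewrite h0 mul0r subr0 => /eqP; rewrite mulf_eq0 (negbTE h1) => /eqP.
    apply/andP; split; apply/eqP; last by field.
    have -> : W2 t1 t2 X Z / be2 X Z * be1 X Z - W1 t1 t2 X Z =
       (be1 X Z * W2 t1 t2 X Z - be2 X Z * W1 t1 t2 X Z) / be2 X Z by field.
    by rewrite hS mul0r.
  have Un : forall t1 t2 X Z y y', ~~ ((X == 0) && (Z == 0)) ->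
      (y * be1 X Z - W1 t1 t2 X Z == 0) && (y * be2 X Z - W2 t1 t2 X Z == 0) ->
      (y' * be1 X Z - W1 t1 t2 X Z == 0) && (y' * be2 X Z - W2 t1 t2 X Z == 0) -> y = y'.
    move=> t1 t2 X Z y y' hXZ /andP [/eqP h1 /eqP k2] /andP [/eqP h1' /eqP k2'].
    have f1 : (y - y') * be1 X Z = 0 by rewrite mulrBl -[y * _](subrK (W1 t1 t2 X Z)) h1 -[y' * _](subrK (W1 t1 t2 X Z)) h1' subrr.
    have f2 : (y - y') * be2 X Z = 0 by rewrite mulrBl -[y * _](subrK (W2 t1 t2 X Z)) k2 -[y' * _](subrK (W2 t1 t2 X Z)) k2' subrr.
    apply/eqP; rewrite -subr_eq0; move: (NZ X Z hXZ) => /orP [] hb.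
      by move/eqP: f1; rewrite mulf_eq0 (negbTE hb) orbF.
    by move/eqP: f2; rewrite mulf_eq0 (negbTE hb) orbF.
  pose g (w : F * F * F * F) :=
    ((w.1.2, yf w.1.1.1 w.1.1.2 w.1.2 w.2, w.2), phi (w.1.1.1, w.1.1.2)).
  have ginj : {in TGT &, injective g}.
    move=> [[[t1 t2] X] Z] [[[t1' t2'] X'] Z'] _ _ [hX _ hZ hphi].
    by move: (phi_inj _ _ hphi) => [-> ->]; rewrite hX hZ.
  rewrite -(card_in_imset ginj); congr (#|pred_of_set _|).
  apply/setP => [[[[X y] Z] u]]; rewrite !inE /=; apply/andP/imsetP.
  - case=> u0 hu.
    have [[t1 t2] ht] := phi_onto u; subst u.
    have hXZ : ~~ ((X == 0) && (Z == 0)).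
      apply: contraNN u0 => /andP [/eqP X0 /eqP Z0]; move: hu; subst X Z.
      have -> : Qf' (0, y, 0) = 0 by rewrite /Qf' /Qf /= rmorph0; ring.
      by rewrite sqrf_eq0.
    move: hu; rewrite EQ => hu.
    exists (t1, t2, X, Z).
      rewrite inE /Rcond /=; apply/and3P; split => //; last by move: u0; rewrite phi_eq0.
      case/andP: hu => /eqP h1 /eqP k2.
      rewrite SE; apply/eqP.
      have -> : W1 t1 t2 X Z = y * be1 X Z by apply/eqP; rewrite eq_sym -subr_eq0 h1.
      have -> : W2 t1 t2 X Z = y * be2 X Z by apply/eqP; rewrite eq_sym -subr_eq0 k2.
      ring.
    rewrite /g /=; congr ((_, _, _), _); symmetry; apply: (Un t1 t2 X Z) => //.
    apply: Ex => //.
    case/andP: hu => /eqP h1 /eqP k2.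
    rewrite SE.
    have -> : W1 t1 t2 X Z = y * be1 X Z by apply/eqP; rewrite eq_sym -subr_eq0 h1.
    have -> : W2 t1 t2 X Z = y * be2 X Z by apply/eqP; rewrite eq_sym -subr_eq0 k2.
    ring.
  - case=> [[[[t1 t2] X'] Z']]; rewrite inE /Rcond /= => /and3P [/eqP hS ht hXZ] [-> -> -> ->].
    by rewrite phi_eq0 ht EQ; split => //; exact: Ex.
have hF : (0 < #|F|.-1)%N by have := @finNzRing_gt1 F; rewrite -subn1 subn_gt0.
have RE : Rest = (2 * Eq_count iota a b c 1%R e)%N.
  apply/eqP; rewrite -(eqn_pmul2r hF) S2 -/TGT -Bij Eq3 -Eq2 Eq1 mulnA.
  done.
rewrite S1 !natrD.
set x0 := (n0 _ _ _ _ _ _ _ _ _)%:R; set xi := (ninf _ _ _ _ _ _ _ _ _)%:R.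
have -> : (x0 + xi + Rest%:R - x0 - xi : rat) = Rest%:R by ring.
rewrite RE natrM; by field.
Qed.
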